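(* Let $\mathfrak{N}$ be a pseudo-Euclidean 2-step nilpotent Lie algebra with center $\mathfrak{Z}$, let $(e_1,\ldots,e_p)$ be any basis of $\mathfrak{Z}$ with associated structure endomorphisms $(J_1,\ldots,J_p)$, and define the endomorphisms $$\mathcal{J}^-=\frac12\sum_{i,j=1}^p\langle e_i,e_j\rangle\, J_i\circ J_j,\qquad \mathcal{J}^+(u)=-\frac14\sum_{i,j=1}^p\langle e_i,u\rangle\,\mathrm{tr}(J_i\circ J_j)\,e_j,$$ and the bilinear forms $\mathfrak{r}^\pm(u,v)=\langle\mathcal{J}^\pm u,v\rangle$. Then the Ricci curvature $\mathfrak{r}$ of $\mathfrak{N}$ satisfies $\mathfrak{r}=\mathfrak{r}^++\mathfrak{r}^-$, and the scalar curvature $\mathfrak{s}$ satisfies $\mathfrak{s}=\frac12\mathrm{tr}\,\mathcal{J}^-=-\mathrm{tr}\,\mathcal{J}^+$.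
   Context: A pseudo-Euclidean Lie algebra is a finite-dimensional real Lie algebra $\mathfrak{g}$ with a nondegenerate symmetric bilinear form $\langle\cdot,\cdot\rangle$. Its Levi-Civita product $\mathcal{D}$ is defined by $2\langle\mathcal{D}_uv,w\rangle=\langle[u,v],w\rangle+\langle[w,u],v\rangle+\langle[w,v],u\rangle$; its curvature is $\mathcal{R}(u,v)w=\mathcal{D}_{[u,v]}w-\mathcal{D}_u\mathcal{D}_vw+\mathcal{D}_v\mathcal{D}_uw$; its Ricci curvature is $\mathfrak{r}(u,v)=\mathrm{tr}(w\mapsto\mathcal{R}(u,w)v)$; writing $\mathfrak{r}(u,v)=\langle\mathcal{J}u,v\rangle$, the scalar curvature is $\mathfrak{s}=\mathrm{tr}\,\mathcal{J}$. A Lie algebra $\mathfrak{N}$ is 2-step nilpotent if $[\mathfrak{N},\mathfrak{N}]\ne0$ and $[\mathfrak{N},\mathfrak{N}]\subset\mathfrak{Z}$ (the center). Given a basis $(e_1,\ldots,e_p)$ of $\mathfrak{Z}$, the structure endomorphisms $J_i$ are the $\langle\cdot,\cdot\rangle$-skew-symmetric endomorphisms with $[u,v]=\sum_i\langle J_iu,v\rangle e_i$; $\mathcal{J}^\pm$ do not depend on the choice of basis. *)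

(* Defs.v *)
(* Vectors of the n-dimensional real vector space are row
   vectors 'rV[R]_n; an endomorphism is a matrix A acting by u |-> u *m A,
   so the composite f \o g of endomorphisms with matrices F, G has matrix
   G *m F. *)
From HB Require Import structures.
From mathcomp Require Import all_boot all_order all_algebra.
Set Implicit Arguments. Unset Strict Implicit. Unset Printing Implicit Defensive.
Import Order.TTheory GRing.Theory Num.Theory.
Local Open Scope ring_scope.

Section Defs.
Variables (R : realFieldType) (n : nat).
Notation V := 'rV[R]_n.

Definition ip (g : 'M[R]_n) (u v : V) : R := (u *m g *m v^T) 0 0.

Definition ebasis (k : 'I_n) : V := delta_mx 0 k.

Definition lintr (f : V -> V) : R := \sum_(k < n) f (ebasis k) 0 k.

Definition curv (br D : V -> V -> V) (u v w : V) : V :=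
  D (br u v) w - D u (D v w) + D v (D u w).

Definition ricci (br D : V -> V -> V) (u v : V) : R :=
  lintr (fun w => curv br D u w v).

(* Ricci operator Jcal, i.e. the matrix with r(u,v) = <Jcal u, v>
   (for g invertible): Jcal = (r(e_a,e_b))_{a,b} * g^{-1} *)
Definition ricciOp (g : 'M[R]_n) (br D : V -> V -> V) : 'M[R]_n :=
  (\matrix_(a, b) ricci br D (ebasis a) (ebasis b)) *m invmx g.

Definition scal (g : 'M[R]_n) (br D : V -> V -> V) : R := \tr (ricciOp g br D).

Definition Jminus (g : 'M[R]_n) (p : nat) (e : 'I_p -> V) (J : 'I_p -> 'M[R]_n)
  : 'M[R]_n :=
  2^-1 *: \sum_(i < p) \sum_(j < p) ip g (e i) (e j) *: (J j *m J i).

(* J^+(u) = -1/4 sum_{i,j} <e_i,u> tr(J_i o J_j) e_j ; its matrix, using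
   u *m (g *m (e i)^T *m e j) = <u, e_i> e_j *)
Definition Jplus (g : 'M[R]_n) (p : nat) (e : 'I_p -> V) (J : 'I_p -> 'M[R]_n)
  : 'M[R]_n :=
  \sum_(i < p) \sum_(j < p)
     (- 4^-1 * \tr (J j *m J i)) *: (g *m (e i)^T *m e j).

End Defs.

(* Main.v *)
Require Import Defs.
From HB Require Import structures.
From mathcomp Require Import all_boot all_order all_algebra.
From mathcomp Require Import lra ring.
Set Implicit Arguments. Unset Strict Implicit. Unset Printing Implicit Defensive.
Import Order.TTheory GRing.Theory Num.Theory.
Local Open Scope ring_scope.

Section Basic.
Variables (R : realFieldType) (n : nat) (g : 'M[R]_n).
Implicit Types (x y z w : 'rV[R]_n).

Lemma ipDl x y w : ip g (x + y) w = ip g x w + ip g y w.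
Proof. by rewrite /ip !mulmxDl mxE. Qed.
Lemma ipZl a x w : ip g (a *: x) w = a * ip g x w.
Proof. by rewrite /ip -!scalemxAl mxE. Qed.
Lemma ipDr x y w : ip g w (x + y) = ip g w x + ip g w y.
Proof. by rewrite /ip linearD /= mulmxDr mxE. Qed.
Lemma ipZr a x w : ip g w (a *: x) = a * ip g w x.
Proof. by rewrite /ip linearZ /= -scalemxAr mxE. Qed.
Lemma ip0l w : ip g 0 w = 0.
Proof. by rewrite /ip !mul0mx mxE. Qed.
Lemma ip0r w : ip g w 0 = 0.
Proof. by rewrite /ip trmx0 mulmx0 mxE. Qed.
Lemma ipNl x w : ip g (- x) w = - ip g x w.
Proof. by rewrite -scaleN1r ipZl mulN1r. Qed.
Lemma ipNr x w : ip g w (- x) = - ip g w x.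
Proof. by rewrite -scaleN1r ipZr mulN1r. Qed.
Lemma ipBl x y w : ip g (x - y) w = ip g x w - ip g y w.
Proof. by rewrite ipDl ipNl. Qed.
Lemma ipBr x y w : ip g w (x - y) = ip g w x - ip g w y.
Proof. by rewrite ipDr ipNr. Qed.
Lemma ip_suml I (r : seq I) (P : pred I) (F : I -> 'rV[R]_n) w :
  ip g (\sum_(i <- r | P i) F i) w = \sum_(i <- r | P i) ip g (F i) w.
Proof. by rewrite /ip !mulmx_suml summxE. Qed.
Lemma ip_sumr I (r : seq I) (P : pred I) (F : I -> 'rV[R]_n) w :
  ip g w (\sum_(i <- r | P i) F i) = \sum_(i <- r | P i) ip g w (F i).
Proof. by rewrite /ip raddf_sum mulmx_sumr summxE. Qed.

Lemma ip_delta (X : 'M[R]_n) i j :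
  ((delta_mx 0 i : 'rV[R]_n) *m X *m (delta_mx 0 j : 'rV[R]_n)^T) 0 0 = X i j.
Proof. by rewrite -rowE trmx_delta -colE !mxE. Qed.

Lemma mx_ext (X Y : 'M[R]_n) :
  (forall x y, (x *m X *m y^T) 0 0 = (x *m Y *m y^T) 0 0) -> X = Y.
Proof. by move=> H; apply/matrixP => i j; rewrite -!ip_delta H. Qed.

Hypothesis g_sym : g^T = g.
Hypothesis g_nondeg : g \in unitmx.

Lemma ipC x y : ip g x y = ip g y x.
Proof.
rewrite /ip; transitivity (((x *m g *m y^T)^T) 0 0); first by rewrite [in RHS]mxE.
by rewrite !trmx_mul trmxK g_sym mulmxA.
Qed.

Lemma nondeg x y : (forall w, ip g x w = ip g y w) -> x = y.
Proof.
move=> H; apply/eqP; rewrite -subr_eq0; apply/eqP.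
have H0 : (x - y) *m g = 0.
  apply/matrixP => i j; rewrite [i]ord1.
  have F : forall z : 'rV[R]_n, (z *m g) 0 j = ip g z (delta_mx 0 j).
    by move=> z; rewrite /ip trmx_delta -colE !mxE.
  by rewrite F ipBl H subrr mxE.
by rewrite -(mulmxK g_nondeg (x - y)) H0 mul0mx.
Qed.
End Basic.
Section Trace.
Variables (R : realFieldType) (n : nat).
Implicit Types (f h : 'rV[R]_n -> 'rV[R]_n).

Lemma L_ext f h : (forall w, f w = h w) -> lintr f = lintr h.
Proof. by move=> H; apply: eq_bigr => k _; rewrite H. Qed.
Lemma L_add f h : lintr (fun w => f w + h w) = lintr f + lintr h.
Proof. by rewrite /lintr -big_split; apply: eq_bigr => k _; rewrite mxE. Qed.
Lemma L_sub f h : lintr (fun w => f w - h w) = lintr f - lintr h.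
Proof.
by rewrite /lintr -sumrB; apply: eq_bigr => k _; rewrite mxE mxE.
Qed.
Lemma L_scale a f : lintr (fun w => a *: f w) = a * lintr f.
Proof. by rewrite /lintr mulr_sumr; apply: eq_bigr => k _; rewrite mxE. Qed.
Lemma L_sum p (F : 'I_p -> 'rV[R]_n -> 'rV[R]_n) :
  lintr (fun w => \sum_(i < p) F i w) = \sum_(i < p) lintr (F i).
Proof. by rewrite /lintr exchange_big; apply: eq_bigr => k _; rewrite summxE. Qed.
Lemma L_zero : lintr (fun w : 'rV[R]_n => 0) = 0.
Proof. by rewrite /lintr big1 // => k _; rewrite mxE. Qed.
Lemma L_mx (M : 'M[R]_n) : lintr (fun w => w *m M) = \tr M.
Proof. by rewrite /lintr /mxtrace; apply: eq_bigr => k _; rewrite /ebasis -rowE mxE. Qed.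
Lemma L_rank1 (phi : 'rV[R]_n -> R) y :
  (forall a x z, phi (a *: x + z) = a * phi x + phi z) ->
  lintr (fun w => phi w *: y) = phi y.
Proof.
move=> Hl.
have H0 : phi 0 = 0.
  have := Hl (-1) 0 0; rewrite scaler0 addr0 mulN1r => E.
  by rewrite addNr in E.
rewrite [in RHS](row_sum_delta y).
rewrite /lintr.
elim/big_rec2: _ => [|k a b _ ->]; first by rewrite H0.
by rewrite Hl mxE mulrC /ebasis.
Qed.
End Trace.
Section Main.
Variables (R : realFieldType) (n : nat) (g : 'M[R]_n).
Hypothesis g_sym : g^T = g.
Hypothesis g_nondeg : g \in unitmx.
Variable br : 'rV[R]_n -> 'rV[R]_n -> 'rV[R]_n.
Hypothesis br_linl : forall (a : R) u v w, br (a *: u + v) w = a *: br u w + br v w.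
Hypothesis br_linr : forall (a : R) u v w, br w (a *: u + v) = a *: br w u + br w v.
Hypothesis br_center : forall u v w, br (br u v) w = 0.
Variables (p : nat) (e : 'I_p -> 'rV[R]_n).
Hypothesis e_center : forall i w, br (e i) w = 0.
Hypothesis e_free : forall c : 'I_p -> R, \sum_(i < p) c i *: e i = 0 -> forall i, c i = 0.
Variable J : 'I_p -> 'M[R]_n.
Hypothesis J_skew : forall i u v, ip g (u *m J i) v = - ip g u (v *m J i).
Hypothesis J_br : forall u v, br u v = \sum_(i < p) ip g (u *m J i) v *: e i.
Variable D : 'rV[R]_n -> 'rV[R]_n -> 'rV[R]_n.
Hypothesis D_def : forall u v w, 2 * ip g (D u v) w =
      ip g (br u v) w + ip g (br w u) v + ip g (br w v) u.

Implicit Types (x y z w u v : 'rV[R]_n).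

Lemma JZ z i : (forall w, br z w = 0) -> z *m J i = 0.
Proof.
move=> Hz; apply: (nondeg g_nondeg) => w; rewrite ip0l.
have := Hz w; rewrite J_br => /e_free; apply.
Qed.

Lemma eJ k x i : ip g (e k) (x *m J i) = 0.
Proof.
have := J_skew i (e k) x; rewrite (JZ i (e_center k)) ip0l => /esym/eqP.
by rewrite oppr_eq0 => /eqP.
Qed.

Lemma eJ' k x i : ip g (x *m J i) (e k) = 0.
Proof. by rewrite (ipC g_sym) eJ. Qed.

Lemma trJ i : \tr (J i) = 0.
Proof.
have E : J i *m g = - (g *m (J i)^T).
  apply: mx_ext => x y.
  rewrite mulmxA -/(ip g (x *m J i) y) J_skew mulmxN mulNmx mxE.
  by rewrite /ip trmx_mul !mulmxA.
have : \tr (J i) = - \tr (J i).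
  rewrite -{1}(mulmxK g_nondeg (J i)) E mulNmx -mulmxA raddfN /= mxtrace_mulC.
  by rewrite -mulmxA mulVmx // mulmx1 mxtrace_tr.
move=> H; lra.
Qed.

Definition A y x := \sum_(i < p) ip g (e i) y *: (x *m J i).

Lemma ip_brA w x y : ip g (br w x) y = - ip g (A y x) w.
Proof.
rewrite J_br /A ip_suml ip_suml -sumrN; apply: eq_bigr => i _.
rewrite ipZl ipZl J_skew (ipC g_sym w); ring.
Qed.

Lemma ipD x y w : ip g (D x y) w =
  2^-1 * (ip g (br x y) w + ip g (br w x) y + ip g (br w y) x).
Proof. have := D_def x y w; move=> H; lra. Qed.

Lemma Dform x y : D x y = 2^-1 *: (br x y - A y x - A x y).
Proof.
apply: (nondeg g_nondeg) => w.
by rewrite ipD ipZl !ipBl !ip_brA.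
Qed.

Lemma aA k y x : ip g (e k) (A y x) = 0.
Proof. by rewrite /A ip_sumr big1 // => i _; rewrite ipZr eJ mulr0. Qed.

Lemma A_Z y z : (forall w, br z w = 0) -> A y z = 0.
Proof. by move=> Hz; rewrite /A big1 // => i _; rewrite (JZ i Hz) scaler0. Qed.


Lemma D_linl a x x' y : D (a *: x + x') y = a *: D x y + D x' y.
Proof.
apply: (nondeg g_nondeg) => w.
rewrite ipDl ipZl !ipD br_linl br_linr !ipDl !ipZl !ipDr !ipZr; ring.
Qed.

Lemma T3 y : lintr (fun w => D w y) = 0.
Proof.
have h1 : lintr (fun w => \sum_i ip g (w *m J i) y *: e i) = 0.
  rewrite L_sum big1 // => i _; rewrite L_rank1 /= ?(JZ i (e_center i)) ?ip0l //.
  by move=> a x z; rewrite mulmxDl -scalemxAl ipDl ipZl.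
have h2 : lintr (fun w => \sum_i ip g (e i) y *: (w *m J i)) = 0.
  by rewrite L_sum big1 // => i _; rewrite L_scale L_mx trJ mulr0.
have h3 : lintr (fun w => \sum_i ip g (e i) w *: (y *m J i)) = 0.
  rewrite L_sum big1 // => i _; rewrite L_rank1 /= ?eJ //.
  by move=> a x z; rewrite ipDr ipZr.
rewrite (L_ext (h := fun w => 2^-1 *: ((\sum_i ip g (w *m J i) y *: e i)
   - (\sum_i ip g (e i) y *: (w *m J i)) - \sum_i ip g (e i) w *: (y *m J i)))).
  by rewrite L_scale !L_sub h1 h2 h3 !subrr mulr0.
by move=> w; rewrite Dform J_br /A.
Qed.

Lemma T1 u v : lintr (fun w => D (br u w) v) =
  - 2^-1 * \sum_i ip g (e i) (br u (v *m J i)).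
Proof.
rewrite (L_ext (h := fun w => (- 2^-1) *: \sum_i ip g (e i) (br u w) *: (v *m J i))).
  rewrite L_scale L_sum; congr (_ * _); apply: eq_bigr => i _.
  by rewrite L_rank1 // => a x z; rewrite br_linr ipDr ipZr.
move=> w; rewrite Dform br_center A_Z; last exact: br_center.
by rewrite sub0r oppr0 sub0r /A scaleNr scalerN.
Qed.

Lemma T2i u v : lintr (fun w => br u (D w v)) =
  \sum_i ip g (u *m J i) (D (e i) v).
Proof.
rewrite (L_ext (h := fun w => \sum_i ip g (u *m J i) (D w v) *: e i)); last first.
  by move=> w; rewrite J_br.
rewrite L_sum; apply: eq_bigr => i _.
by rewrite L_rank1 // => a x z; rewrite D_linl ipDr ipZr.
Qed.

Lemma T2ii u v : lintr (fun w => A (D w v) u) =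
  \sum_j ip g (e j) (D (u *m J j) v).
Proof.
rewrite /A L_sum; apply: eq_bigr => j _.
by rewrite L_rank1 // => a x z; rewrite D_linl ipDr ipZr.
Qed.

Lemma T2iii_aux v j : lintr (fun w => D w v *m J j) =
  - 2^-1 * \sum_i ip g (e i) v * \tr (J i *m J j).
Proof.
rewrite (L_ext (h := fun w => (- 2^-1) *: (\sum_i ip g (e i) v *: (w *m (J i *m J j))
   + \sum_i ip g (e i) w *: (v *m J i *m J j)))).
  rewrite L_scale L_add !L_sum; congr (_ * _).
  rewrite [X in _ + X]big1 ?addr0 => [|i _]; last first.
    by rewrite L_rank1 /= ?mulmxA ?eJ // => a x z; rewrite ipDr ipZr.
  by apply: eq_bigr => i _; rewrite L_scale L_mx.
move=> w; rewrite Dform -scalemxAl !mulmxBl (JZ j); last exact: br_center.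
rewrite sub0r /A !mulmx_suml -opprD scaleNr scalerN; congr (- (_ *: (_ + _))).
  by apply: eq_bigr => i _; rewrite -scalemxAl mulmxA.
by apply: eq_bigr => i _; rewrite -scalemxAl.
Qed.

Lemma T2iii u v : lintr (fun w => A u (D w v)) =
  \sum_j ip g (e j) u * (- 2^-1 * \sum_i ip g (e i) v * \tr (J i *m J j)).
Proof.
rewrite /A L_sum; apply: eq_bigr => j _.
by rewrite L_scale T2iii_aux.
Qed.

Lemma Jskew2 x y k i : ip g (x *m J k) (y *m J i) = - ip g (x *m J k *m J i) y.
Proof. by rewrite (J_skew i (x *m J k) y) opprK. Qed.

Lemma ip_rank1 x y z w : ip g (x *m (g *m y^T *m z)) w = ip g x y * ip g z w.
Proof.
rewrite !mulmxA [x *m g *m y^T]mx11_scalar mul_scalar_mx ipZl //.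
Qed.

Lemma ricci_formula u v : ricci br D u v =
  ip g (u *m Jplus g e J) v + ip g (u *m Jminus g e J) v.
Proof.
set S := \sum_i \sum_k ip g (e i) (e k) * ip g (u *m J k *m J i) v.
set Q := \sum_i \sum_j ip g (e i) u * ip g (e j) v * \tr (J j *m J i).
rewrite /ricci /curv.
rewrite L_add L_sub T3 addr0 T1.
rewrite (L_ext (h := fun w => 2^-1 *: (br u (D w v) - A (D w v) u - A u (D w v))));
  last by move=> w; rewrite Dform.
rewrite L_scale !L_sub T2i T2ii T2iii.
have h1 : \sum_i ip g (e i) (br u (v *m J i)) = - S.
  rewrite /S -sumrN; apply: eq_bigr => i _.
  rewrite J_br ip_sumr -sumrN; apply: eq_bigr => k _.
  rewrite ipZr Jskew2; ring.
have h2 : \sum_i ip g (u *m J i) (D (e i) v) = 2^-1 * S.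
  rewrite /S exchange_big mulr_sumr; apply: eq_bigr => i _.
  rewrite Dform e_center A_Z // sub0r oppr0 sub0r ipZr ipNr /A ip_sumr.
  rewrite mulr_sumr -sumrN mulr_sumr; apply: eq_bigr => j _.
  rewrite ipZr Jskew2; ring.
have h3 : \sum_j ip g (e j) (D (u *m J j) v) = 2^-1 * S.
  rewrite /S exchange_big mulr_sumr; apply: eq_bigr => j _.
  rewrite Dform ipZr !ipBr !aA !subr0 J_br ip_sumr; congr (_ * _).
  apply: eq_bigr => k _; rewrite ipZr (ipC g_sym (e j)); ring.
have h4 : \sum_j ip g (e j) u * (- 2^-1 * \sum_i ip g (e i) v * \tr (J i *m J j))
   = - 2^-1 * Q.
  rewrite /Q mulr_sumr; apply: eq_bigr => j _.
  rewrite mulr_sumr mulr_sumr mulr_sumr; apply: eq_bigr => i _; ring.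
have h5 : ip g (u *m Jplus g e J) v = - 4^-1 * Q.
  rewrite /Jplus /Q mulmx_sumr ip_suml mulr_sumr; apply: eq_bigr => i _.
  rewrite mulmx_sumr ip_suml mulr_sumr; apply: eq_bigr => j _.
  rewrite -scalemxAr ipZl ip_rank1 (ipC g_sym u); ring.
have h6 : ip g (u *m Jminus g e J) v = 2^-1 * S.
  rewrite /Jminus /S -scalemxAr ipZl mulmx_sumr ip_suml; congr (_ * _).
  apply: eq_bigr => i _; rewrite mulmx_sumr ip_suml; apply: eq_bigr => j _.
  by rewrite -scalemxAr ipZl mulmxA.
rewrite h1 h2 h3 h4 h5 h6; lra.
Qed.

Lemma ricciOp_eq : ricciOp g br D = Jplus g e J + Jminus g e J.
Proof.
rewrite /ricciOp.
have -> : \matrix_(a, b) ricci br D (ebasis R a) (ebasis R b) =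
    (Jplus g e J + Jminus g e J) *m g.
  apply/matrixP => a b; rewrite mxE ricci_formula -ipDl -mulmxDr /ip /ebasis.
  by rewrite -!mulmxA [_ *m (g *m _)]mulmxA (mulmxA (delta_mx 0 a)) ip_delta.
by rewrite mulmxK.
Qed.

Lemma tr_rank1 (x y : 'rV[R]_n) : \tr (g *m x^T *m y) = ip g y x.
Proof. by rewrite mxtrace_mulC mulmxA /mxtrace big_ord1. Qed.

Lemma scal_formula : scal g br D = 2^-1 * \tr (Jminus g e J) /\
  scal g br D = - \tr (Jplus g e J).
Proof.
have trP : \tr (Jplus g e J) =
    \sum_i \sum_j (- 4^-1 * \tr (J j *m J i)) * ip g (e j) (e i).
  rewrite /Jplus raddf_sum; apply: eq_bigr => i _.
  rewrite raddf_sum; apply: eq_bigr => j _.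
  by rewrite /= mxtraceZ tr_rank1.
have trM : \tr (Jminus g e J) =
    2^-1 * \sum_i \sum_j ip g (e i) (e j) * \tr (J j *m J i).
  rewrite /Jminus mxtraceZ raddf_sum; congr (_ * _); apply: eq_bigr => i _.
  rewrite raddf_sum; apply: eq_bigr => j _.
  by rewrite /= mxtraceZ.
have E : \tr (Jplus g e J) = - 2^-1 * \tr (Jminus g e J).
  rewrite trP trM mulrA mulr_sumr; apply: eq_bigr => i _.
  rewrite mulr_sumr; apply: eq_bigr => j _.
  rewrite (ipC g_sym (e j)); lra.
rewrite /scal ricciOp_eq mxtraceD E; split; lra.
Qed.

End Main.
Theorem mainTheorem3 (R : realFieldType) (n : nat)
  (* pseudo-Euclidean metric: symmetric, nondegenerate *)
  (g : 'M[R]_n) (g_sym : g^T = g) (g_nondeg : g \in unitmx)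
  (* Lie bracket: bilinear, alternating, Jacobi *)
  (br : 'rV[R]_n -> 'rV[R]_n -> 'rV[R]_n)
  (br_linl : forall (a : R) u v w, br (a *: u + v) w = a *: br u w + br v w)
  (br_linr : forall (a : R) u v w, br w (a *: u + v) = a *: br w u + br w v)
  (br_alt : forall u, br u u = 0)
  (br_jacobi : forall u v w,
      br u (br v w) + br v (br w u) + br w (br u v) = 0)
  (* 2-step nilpotent: [N,N] <> 0 and [N,N] contained in the center *)
  (br_nonzero : exists u v, br u v != 0)
  (br_center : forall u v w, br (br u v) w = 0)
  (* a basis (e_1,...,e_p) of the center Z *)
  (p : nat) (e : 'I_p -> 'rV[R]_n)
  (e_center : forall i w, br (e i) w = 0)
  (e_free : forall c : 'I_p -> R, \sum_(i < p) c i *: e i = 0 -> forall i, c i = 0)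
  (e_span : forall z, (forall w, br z w = 0) ->
      exists c : 'I_p -> R, z = \sum_(i < p) c i *: e i)
  (* the structure endomorphisms J_i (acting by u |-> u *m J i) *)
  (J : 'I_p -> 'M[R]_n)
  (J_skew : forall i u v, ip g (u *m J i) v = - ip g u (v *m J i))
  (J_br : forall u v, br u v = \sum_(i < p) ip g (u *m J i) v *: e i)
  (* the Levi-Civita product *)
  (D : 'rV[R]_n -> 'rV[R]_n -> 'rV[R]_n)
  (D_def : forall u v w, 2 * ip g (D u v) w =
      ip g (br u v) w + ip g (br w u) v + ip g (br w v) u) :
  (forall u v, ricci br D u v =
      ip g (u *m Jplus g e J) v + ip g (u *m Jminus g e J) v) /\
  scal g br D = 2^-1 * \tr (Jminus g e J) /\
  scal g br D = - \tr (Jplus g e J).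
Proof.
have [S1 S2] := scal_formula g_sym g_nondeg br_linl br_linr br_center e_center e_free J_skew J_br D_def.
split; last by split.
move=> u v.
exact: (ricci_formula g_sym g_nondeg br_linl br_linr br_center e_center e_free J_skew J_br D_def).
Qed.
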